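(* Let $X$ be an algebraic L-space. Then $X$ is kernel-stable (i.e., $X$ is an arithmetic L-space) if and only if $U\cap V\in{\sf ClopSUp}(X)$ for all $U,V\in{\sf ClopSUp}(X)$.
   Context: A Priestley space is a Stone space $X$ with a partial order such that clopen upsets separate points. An L-space is a Priestley space in which the downset of each clopen set is clopen and the closure of each open upset is open. ${\sf ClopUp}(X)$ is the set of clopen upsets; $\mathrm{cl}$ denotes closure. The spatial part of $X$ is $Y=\{y\in X\mid{\downarrow}y\text{ clopen}\}$. A Scott upset is a closed upset $F$ with $\min F\subseteq Y$; ${\sf ClopSUp}(X)$ is the set of clopen Scott upsets. For $U,V\in{\sf ClopUp}(X)$, $V\ll U$ means that for every open upset $W$, $U\subseteq\mathrm{cl}\,W$ implies $V\subseteq W$; $\ker U=\bigcup\{V\in{\sf ClopUp}(X)\mid V\ll U\}$; $\mathrm{core}\,U=\bigcup\{V\in{\sf ClopSUp}(X)\mid V\subseteq U\}$. $X$ is an algebraic L-space if $\mathrm{core}\,U$ is dense in $U$ for each $U\in{\sf ClopUp}(X)$; it is kernel-stable if $\ker(U\cap V)=\ker U\cap\ker V$ for all $U,V\in{\sf ClopUp}(X)$. An arithmetic L-space is a kernel-stable algebraic L-space. *)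

(* Defs.v *)
From mathcomp Require Import all_boot.
From mathcomp Require Import all_classical all_reals topology.
Set Implicit Arguments. Unset Strict Implicit. Unset Printing Implicit Defensive.
Local Open Scope classical_set_scope.

Section LSpaces.
Variables (T : topologicalType) (le : T -> T -> Prop).

Definition is_partial_order : Prop :=
  [/\ (forall x, le x x),
      (forall x y, le x y -> le y x -> x = y) &
      (forall x y z, le x y -> le y z -> le x z)].

Definition stone_space : Prop :=
  [/\ compact [set: T], hausdorff_space T &
      (forall (O : set T) x, open O -> O x ->
         exists C : set T, [/\ clopen C, C x & C `<=` O])].

Definition upset (A : set T) : Prop := forall x y, A x -> le x y -> A y.

Definition downset_of (A : set T) : set T := [set y | exists2 x, A x & le y x].

Definition ClopUp (U : set T) : Prop := clopen U /\ upset U.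

Definition priestley_space : Prop :=
  [/\ is_partial_order, stone_space &
      (forall x y, ~ le x y -> exists U, [/\ ClopUp U, U x & ~ U y])].

Definition L_space : Prop :=
  [/\ priestley_space,
      (forall U : set T, clopen U -> clopen (downset_of U)) &
      (forall U : set T, open U -> upset U -> open (closure U))].

Definition spatial_part : set T := [set y | clopen (downset_of [set y])].

Definition minimals (F : set T) : set T :=
  [set x | F x /\ forall y, F y -> le y x -> y = x].

Definition scott_upset (F : set T) : Prop :=
  [/\ closed F, upset F & minimals F `<=` spatial_part].

Definition ClopSUp (U : set T) : Prop := clopen U /\ scott_upset U.

Definition way_below (V U : set T) : Prop :=
  forall W : set T, open W -> upset W -> U `<=` closure W -> V `<=` W.

Definition ker (U : set T) : set T :=
  [set x | exists2 V : set T, ClopUp V /\ way_below V U & V x].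

Definition core (U : set T) : set T :=
  [set x | exists2 V : set T, ClopSUp V /\ V `<=` U & V x].

Definition algebraic_L_space : Prop :=
  L_space /\ (forall U, ClopUp U -> U `<=` closure (core U)).

Definition kernel_stable : Prop :=
  forall U V, ClopUp U -> ClopUp V -> ker (U `&` V) = ker U `&` ker V.

Definition arithmetic_L_space : Prop := algebraic_L_space /\ kernel_stable.

End LSpaces.

(* Main.v *)
Require Import Defs.
From mathcomp Require Import all_boot.
From mathcomp Require Import all_classical all_reals topology.
Local Open Scope classical_set_scope.

Lemma compact_fip (T : topologicalType) (I : choiceType) (D : set I) (f : I -> set T) :
  compact [set: T] -> (forall i, D i -> closed (f i)) -> finI D f -> (exists i, D i) ->
  \bigcap_(i in D) f i !=set0.
Proof.
move=> Aco gcl finIf [i Di].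
have [|p [_ clfinIfp]] := Aco _ (finI_filter finIf).
  by exists (f i); [apply: finI_from1|].
exists p => j Dj; apply: gcl => // B.
by apply: clfinIfp; exists (f j); [apply: finI_from1|].
Qed.

Section S.
Variables (T : topologicalType) (le : T -> T -> Prop).

Lemma down_closed : priestley_space le -> forall t, closed [set y | le y t].
Proof.
move=> [_ _ sep] t.
have -> : [set y | le y t] = ~` ~` [set y | le y t] by rewrite setCK.
apply: open_closedC; rewrite openE => y /= nyt.
have [U [[[oU _] uU] Uy nUt]] := sep _ _ nyt.
apply: (@filterS _ _ _ U); last by apply: open_nbhs_nbhs.
by move=> z Uz lzt; apply: nUt; apply: uU lzt.
Qed.

Lemma exists_minimal : priestley_space le -> forall F : set T, closed F ->
  forall x, F x -> exists m, [/\ minimals le F m & le m x].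
Proof.
move=> PS F cF x Fx.
have [[lerefl leanti letrans] [Tco _ _] _] := PS.
pose T' := {y : T | F y /\ le y x}.
pose R := fun a b : T' => `[< le (sval b) (sval a) >].
have := @Zorn T' R.
case.
- by move=> a; apply/asboolP.
- by move=> a b c /asboolP ab /asboolP bc; apply/asboolP; apply: letrans bc ab.
- move=> [a pa] [b pb] /asboolP /= ab /asboolP /= ba.
  have e := leanti _ _ ba ab; subst b.
  by congr exist; apply: Prop_irrelevance.
- move=> A Atot.
  pose D := [set t | t = x \/ exists2 a, A a & sval a = t].
  pose f := fun t => F `&` [set y | le y t].
  have Dle : forall t, D t -> F t /\ le t x.
    by move=> t [->|[a _ <-]]; [split|case: (svalP a)].
  have : \bigcap_(i in D) f i !=set0.
    apply: compact_fip => //.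
    - by move=> i _; apply: closedI => //; apply: down_closed.
    - move=> D' sD.
      have claim : forall s : seq T, (forall u, u \in s -> D u) ->
          exists m, D m /\ forall t, t \in s -> le m t.
        elim=> [|t s IH] ss; first by exists x; split => //; left.
        have [|m [Dm Hm]] := IH.
          by move=> u us; apply: ss; rewrite inE us orbT.
        have Dt : D t by apply: ss; rewrite inE eqxx.
        have ltx := (Dle _ Dt).2.
        have pick : le m t \/ le t m.
          case: Dm => [->|[a Aa <-]]; first by right.
          case: Dt => [->|[b Ab <-]]; first by left; case: (svalP a).
          by case: (Atot _ _ Aa Ab) => /asboolP; [right|left].
        case: pick => [mt|tm].
          exists m; split => // u; rewrite inE => /orP[/eqP->|/Hm] //.
        exists t; split => // u; rewrite inE => /orP[/eqP->|/Hm] //.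
        by move=> mu; apply: letrans tm mu.
      have [m [Dm Hm]] := claim (finmap.enum_fset D') (fun u uD => set_mem (sD u uD)).
      exists m => t /= tD; split; first exact: (Dle _ Dm).1.
      by apply: Hm.
    - by exists x; left.
  move=> [y Hy].
  have [Fy lyx] := Hy x (or_introl erefl).
  exists (exist _ y (conj Fy lyx)) => s As; apply/asboolP => /=.
  by have [] := Hy (sval s) (or_intror (ex_intro2 _ _ s As erefl)).
- move=> t tmax; exists (sval t); split; last by case: (svalP t).
  split; first by case: (svalP t).
  move=> y Fy lyt.
  have lyx : le y x by apply: letrans lyt (svalP t).2.
  have := tmax (exist _ y (conj Fy lyx)).
  by move=> /(_ (introT (asboolP _) lyt)) => <-.
Qed.
End S.

Section Main.
Variables (T : topologicalType) (le : T -> T -> Prop).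

Lemma L1 : priestley_space le -> forall S, ClopSUp le S -> way_below le S S.
Proof.
move=> PS S [[_ cS] [_ uS mS]] W oW uW SW x Sx.
have [m [[Sm mmin] lmx]] := @exists_minimal T le PS S cS x Sx.
have Ym : spatial_part le m by apply: mS; split.
have [oD _] := Ym.
have PS' := PS; have [[lerefl _ _] _ _] := PS'.
have [w [Ww [m' em lwm]]] : W `&` downset_of le [set m] !=set0.
  apply: (SW _ Sm); apply: open_nbhs_nbhs; split => //.
  by exists m.
rewrite em in lwm.
by apply: (uW _ _ _ lmx); apply: (uW _ _ Ww lwm).
Qed.

Lemma L2 A B A' B' : way_below le A B -> A' `<=` A -> B `<=` B' -> way_below le A' B'.
Proof.
move=> AB sA sB W oW uW B'W; apply: subset_trans sA _.
apply: AB => //; exact: subset_trans sB B'W.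
Qed.

Lemma L3 : algebraic_L_space le -> forall U, ClopUp le U -> ker le U `<=` core le U.
Proof.
move=> [_ alg] U UU x [A [_ AU] Ax].
apply: (AU _ _ _ (alg _ UU)) => //.
- rewrite openE => y [V [SV VU] Vy].
  apply: (@filterS _ _ _ V); last by apply: open_nbhs_nbhs; split => //; exact: SV.1.1.
  by move=> z Vz; exists V.
- move=> y z [V [SV VU] Vy] yz; exists V => //.
  by case: SV => _ [_ uV _]; apply: (uV _ _ Vy yz).
Qed.

Lemma ClopSUp_ClopUp {S} : ClopSUp le S -> ClopUp le S.
Proof. by move=> [cS [_ uS _]]. Qed.

Lemma lemma5p2' :
  algebraic_L_space le ->
  (kernel_stable le <->
   (forall U V : set T, ClopSUp le U -> ClopSUp le V -> ClopSUp le (U `&` V))).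
Proof.
move=> AL; have PS : priestley_space le by case: AL => -[].
split.
- move=> ks U V SU SV.
  have UU := ClopSUp_ClopUp SU; have UV := ClopSUp_ClopUp SV.
  have UUV : ClopUp le (U `&` V).
    case: UU UV => [cU uU] [cV uV]; split; first exact: clopenI.
    by move=> x y [Ux Vx] xy; split; [apply: uU xy|apply: uV xy].
  split; first exact: UUV.1.
  split; [exact: UUV.1.2|exact: UUV.2|].
  move=> m [[Um Vm] mmin].
  have : ker le (U `&` V) m.
    rewrite ks //; split; [exists U|exists V] => //; split => //; exact: L1.
  move=> /(L3 AL _ UUV) [S [SS SUV] Sm].
  case: (SS) => _ [_ _ mS]; apply: mS; split => // y Sy ym.
  by apply: mmin => //; apply: SUV.
- move=> hyp U V UU UV; apply/seteqP; split.
  + move=> x [A [AA AUV] Ax]; split; exists A => //; split => //;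
      by apply: (L2 _ _ _ _ AUV).
  + move=> x [/(L3 AL _ UU) [S1 [S1S S1U] S1x] /(L3 AL _ UV) [S2 [S2S S2V] S2x]].
    have SS := hyp _ _ S1S S2S.
    exists (S1 `&` S2) => //; split; first exact: ClopSUp_ClopUp.
    apply: (L2 _ _ _ _ (L1 PS _ SS)) => // y [] /S1U ? /S2V ?; by split.
Qed.
End Main.

Theorem lemma5p2 (T : topologicalType) (le : T -> T -> Prop) :
  algebraic_L_space le ->
  (kernel_stable le <->
   (forall U V : set T, ClopSUp le U -> ClopSUp le V -> ClopSUp le (U `&` V))).
Proof. exact: lemma5p2'. Qed.
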